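(* Let $(X_j)_{j\in\mathbb{Z}^2}$ be i.i.d. Poisson random variables with mean $\lambda>0$ and let $N_n$ be the greedy lattice animal weight of size $n$. Then for every $k\in\mathbb{N}$ there is $C<\infty$ (depending on $k,\lambda$) such that $\mathbb{E}N_n^k\le Cn^k$ for all $n\in\mathbb{N}$.
   Context: A lattice animal is a connected subset of $\mathbb{Z}^2$ containing the origin; $A(n)$ is the set of lattice animals with $n$ sites; $N_n=\max_{\mathcal{A}\in A(n)}\sum_{k\in\mathcal{A}}X_k$. *)

(* Defs.v *)
From Stdlib Require Import Reals ZArith List Arith ClassicalEpsilon.
Import ListNotations.
Open Scope R_scope.

Definition site := (Z * Z)%type.
Definition origin : site := (0%Z, 0%Z).

Definition adjacent (p q : site) : Prop :=
  (Z.abs (fst p - fst q) + Z.abs (snd p - snd q))%Z = 1%Z.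

Inductive reach (A : list site) : site -> Prop :=
| reach_origin : In origin A -> reach A origin
| reach_step : forall p q, reach A p -> adjacent p q -> In q A -> reach A q.

Definition animal (n : nat) (A : list site) : Prop :=
  NoDup A /\ length A = n /\ In origin A /\ (forall p, In p A -> reach A p).

Definition config := site -> nat.

Definition weight (x : config) (A : list site) : nat :=
  fold_right (fun p acc => (x p + acc)%nat) 0%nat A.

Definition is_greedy (n : nat) (x : config) (v : nat) : Prop :=
  (exists A, animal n A /\ weight x A = v) /\
  (forall A, animal n A -> (weight x A <= v)%nat).

(* N_n as a function of the configuration (well defined for n >= 1,
   since the maximum over the finite nonempty set A(n) exists). *)
Definition N (n : nat) (x : config) : nat :=
  epsilon (inhabits 0%nat) (fun v => is_greedy n x v).

Definition poisson_pmf (lam : R) (v : nat) : R :=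
  exp (- lam) * lam ^ v / INR (fact v).

(* the box [-n,n]^2, which contains every animal of size n *)
Definition box (n : nat) : list site :=
  flat_map (fun i => map (fun j => (Z.of_nat i - Z.of_nat n, Z.of_nat j - Z.of_nat n)%Z)
                          (seq 0 (2 * n + 1)))
           (seq 0 (2 * n + 1)).

Definition update (x : config) (s : site) (v : nat) : config :=
  fun p => if (Z.eqb (fst p) (fst s) && Z.eqb (snd p) (snd s))%bool then v else x p.

Fixpoint sum_range (M : nat) (f : nat -> R) : R :=
  match M with
  | O => f O
  | S m => sum_range m f + f (S m)
  end.

(* sum over all assignments of values in {0..M} to the given sites (other
   sites keep their value in x0) of  prod Poisson(lam) weights * F config. *)
Fixpoint trunc_sum (lam : R) (M : nat) (sites : list site)
         (F : config -> R) (x0 : config) : R :=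
  match sites with
  | [] => F x0
  | s :: rest => sum_range M (fun v =>
                   poisson_pmf lam v * trunc_sum lam M rest F (update x0 s v))
  end.

(* Truncated expectation E[ N_n^k ; all X_j <= M for j in the box ].
   Since N_n depends only on (X_j)_{j in box n} and N_n^k >= 0,
   E[N_n^k] = sup_M trunc_moment lam n k M (monotone convergence). *)
Definition trunc_moment (lam : R) (n k M : nat) : R :=
  trunc_sum lam M (box n) (fun x => INR (N n x) ^ k) (fun _ => 0%nat).

(* Main.v *)
Require Import Defs.
From Stdlib Require Import Reals List Permutation Lia Lra ZArith Arith Classical ClassicalEpsilon.
Import ListNotations.
Open Scope R_scope.

Lemma exp_partial (y : R) (M : nat) : 0 <= y ->
  sum_f_R0 (fun i => / INR (fact i) * y ^ i) M <= exp y.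
Proof.
  intros Hy. unfold exp. destruct (exist_exp y) as [l Hl]. simpl.
  apply (growing_ineq (sum_f_R0 (fun i => / INR (fact i) * y ^ i))).
  - unfold Un_growing; intro n. rewrite tech5. assert (0 <= / INR (fact (S n)) * y ^ S n).
    { apply Rmult_le_pos. left; apply Rinv_0_lt_compat, lt_0_INR, lt_O_fact.
      apply pow_le; assumption. } lra.
  - exact Hl.
Qed.

Lemma exp_term (y : R) (k : nat) : 0 <= y -> y ^ k / INR (fact k) <= exp y.
Proof.
  intros Hy. eapply Rle_trans; [|apply (exp_partial y k Hy)].
  destruct k.
  - simpl. unfold Rdiv. rewrite Rmult_comm. lra.
  - rewrite tech5. unfold Rdiv. rewrite Rmult_comm.
    assert (0 <= sum_f_R0 (fun i => / INR (fact i) * y ^ i) k).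
    { apply cond_pos_sum. intro i. apply Rmult_le_pos.
      left; apply Rinv_0_lt_compat, lt_0_INR, lt_O_fact. apply pow_le; lra. }
    lra.
Qed.

Lemma sum_range_eq M f : sum_range M f = sum_f_R0 f M.
Proof. induction M; simpl; auto. rewrite IHM; auto. Qed.

Lemma pmf_nonneg lam v : 0 <= lam -> 0 <= poisson_pmf lam v.
Proof.
  intros. unfold poisson_pmf, Rdiv. apply Rmult_le_pos.
  apply Rmult_le_pos. left; apply exp_pos. apply pow_le; auto.
  left; apply Rinv_0_lt_compat, lt_0_INR, lt_O_fact.
Qed.

Definition mm (lam : R) := exp (lam * (exp 1 - 1)).

Lemma pmf_sum1 lam M : 0 <= lam -> sum_range M (poisson_pmf lam) <= 1.
Proof.
  intros H. rewrite sum_range_eq.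
  assert (E : sum_f_R0 (poisson_pmf lam) M = exp (-lam) * sum_f_R0 (fun i => / INR (fact i) * lam ^ i) M).
  { rewrite scal_sum. apply sum_eq. intros. unfold poisson_pmf. field.
    apply not_0_INR, fact_neq_0. }
  rewrite E. replace 1 with (exp (-lam) * exp lam).
  apply Rmult_le_compat_l. left; apply exp_pos. apply exp_partial; auto.
  rewrite <- exp_plus. replace (-lam+lam) with 0 by ring. apply exp_0.
Qed.

Lemma pmf_sume lam M : 0 <= lam ->
  sum_range M (fun v => poisson_pmf lam v * exp (INR v)) <= mm lam.
Proof.
  intros H. rewrite sum_range_eq.
  assert (E : sum_f_R0 (fun v => poisson_pmf lam v * exp (INR v)) M = exp (-lam) * sum_f_R0 (fun i => / INR (fact i) * (lam * exp 1) ^ i) M).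
  { rewrite scal_sum. apply sum_eq. intros. unfold poisson_pmf.
    assert (Hp : exp (INR i) = exp 1 ^ i).
    { clear H0. induction i. simpl; rewrite exp_0; auto.
      rewrite S_INR, exp_plus, IHi. simpl. ring. }
    rewrite Rpow_mult_distr, Hp. field.
    apply not_0_INR, fact_neq_0. }
  rewrite E. unfold mm. replace (lam * (exp 1 - 1)) with (-lam + lam * exp 1) by ring.
  rewrite exp_plus.
  apply Rmult_le_compat_l. left; apply exp_pos. apply exp_partial.
  apply Rmult_le_pos; auto. left; apply exp_pos.
Qed.

Lemma sum_range_ext M f g : (forall v, f v = g v) -> sum_range M f = sum_range M g.
Proof. intros H; induction M; simpl; rewrite ?IHM, ?H; auto. Qed.
Lemma sum_range_le M f g : (forall v, f v <= g v) -> sum_range M f <= sum_range M g.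
Proof. intros H; induction M; simpl; auto. apply Rplus_le_compat; auto. Qed.
Lemma sum_range_plus M f g : sum_range M (fun v => f v + g v) = sum_range M f + sum_range M g.
Proof. induction M; simpl; auto. rewrite IHM; ring. Qed.
Lemma sum_range_scal M c f : sum_range M (fun v => c * f v) = c * sum_range M f.
Proof. induction M; simpl; auto. rewrite IHM; ring. Qed.

Section TS.
Variable lam : R.
Variable M : nat.

Lemma TS_ext L F G x0 : (forall x, F x = G x) -> trunc_sum lam M L F x0 = trunc_sum lam M L G x0.
Proof.
  intros H; revert x0; induction L; intros; simpl; auto.
  apply sum_range_ext; intro v; rewrite IHL; auto.
Qed.

Lemma TS_mono L F G x0 : 0 <= lam -> (forall x, F x <= G x) -> trunc_sum lam M L F x0 <= trunc_sum lam M L G x0.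
Proof.
  intros Hl H; revert x0; induction L; intros; simpl; auto.
  apply sum_range_le; intro v. apply Rmult_le_compat_l; auto. apply pmf_nonneg; auto.
Qed.

Lemma TS_plus L F G x0 : trunc_sum lam M L (fun x => F x + G x) x0 = trunc_sum lam M L F x0 + trunc_sum lam M L G x0.
Proof.
  revert x0; induction L; intros; simpl; auto.
  rewrite <- sum_range_plus. apply sum_range_ext; intro v. rewrite IHL; ring.
Qed.

Lemma TS_scal L c F x0 : trunc_sum lam M L (fun x => c * F x) x0 = c * trunc_sum lam M L F x0.
Proof.
  revert x0; induction L; intros; simpl; auto.
  rewrite <- sum_range_scal. apply sum_range_ext; intro v. rewrite IHL; ring.
Qed.

Lemma TS_zero L x0 : trunc_sum lam M L (fun _ => 0) x0 = 0.
Proof.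
  rewrite (TS_ext L (fun _ => 0) (fun x => 0 * 0)) by (intros; ring).
  rewrite TS_scal; ring.
Qed.

Definition sumL {A} (ws : list A) (h : A -> R) : R := fold_right (fun w acc => h w + acc) 0 ws.

Lemma TS_sumL {A} (ws : list A) g L x0 :
  trunc_sum lam M L (fun x => sumL ws (fun w => g w x)) x0 = sumL ws (fun w => trunc_sum lam M L (g w) x0).
Proof.
  induction ws; simpl. apply TS_zero.
  rewrite TS_plus, IHws; auto.
Qed.
End TS.

Lemma sumL_ge {A} (ws : list A) h w : In w ws -> (forall u, 0 <= h u) -> h w <= sumL ws h.
Proof.
  intros Hin H; induction ws; simpl in *; [contradiction|].
  assert (0 <= sumL ws h).
  { clear Hin IHws. induction ws; simpl; [lra|]. specialize (H a0); lra. }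
  destruct Hin as [<-|Hin]. lra. specialize (IHws Hin). specialize (H a). lra.
Qed.

Lemma sumL_le {A} (ws : list A) h B : (forall u, In u ws -> h u <= B) -> sumL ws h <= INR (length ws) * B.
Proof.
  induction ws; intros H. simpl; lra.
  change (sumL (a :: ws) h) with (h a + sumL ws h). change (length (a :: ws)) with (S (length ws)).
  rewrite S_INR. assert (h a <= B) by (apply H; simpl; auto).
  assert (sumL ws h <= INR (length ws) * B) by (apply IHws; intros; apply H; simpl; auto).
  lra.
Qed.

Definition site_eq_dec : forall p q : site, {p = q} + {p <> q}.
Proof. decide equality; apply Z.eq_dec. Defined.

Definition zero (L : list site) (x : config) : config :=
  fun p => if in_dec site_eq_dec p L then 0%nat else x p.

Definition cnt (L S : list site) : nat :=
  length (filter (fun t => if in_dec site_eq_dec t L then true else false) S).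

Lemma weight_ext x y S : (forall p, In p S -> x p = y p) -> weight x S = weight y S.
Proof.
  induction S; intros H; simpl; auto. rewrite H, IHS; simpl; auto.
  intros; apply H; simpl; auto.
Qed.

Lemma update_spec x s v p : update x s v p = if site_eq_dec p s then v else x p.
Proof.
  destruct p as [a b], s as [c d]; unfold update.
  destruct (site_eq_dec (a,b) (c,d)) as [E|E]; cbn [fst snd].
  - injection E; intros; subst. rewrite !Z.eqb_refl; auto.
  - destruct (Z.eqb_spec a c), (Z.eqb_spec b d); subst; simpl; auto; congruence.
Qed.

Lemma weight_update y s v S : y s = 0%nat -> NoDup S ->
  weight (update y s v) S = (weight y S + (if in_dec site_eq_dec s S then v else 0))%nat.
Proof.
  intros Hy; induction S; intros HS; simpl; auto.
  inversion HS; subst. rewrite IHS by auto.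
  rewrite update_spec. destruct (site_eq_dec a s).
  - subst. rewrite Hy. destruct (in_dec site_eq_dec s S); [contradiction|].
    destruct (site_eq_dec s s); [|congruence]. simpl. lia.
  - destruct (in_dec site_eq_dec s S), (site_eq_dec a s), (in_dec site_eq_dec s (a :: S));
    simpl in *; try congruence; try lia; tauto.
Qed.

Lemma weight_zero S : weight (fun _ => 0%nat) S = 0%nat.
Proof. induction S; simpl; auto. Qed.

Lemma cnt_cons s rest S : ~ In s rest -> NoDup S ->
  cnt (s :: rest) S = ((if in_dec site_eq_dec s S then 1 else 0) + cnt rest S)%nat.
Proof.
  intros Hs; unfold cnt; induction S; intros HS. reflexivity.
  inversion HS; subst. cbn [filter].
  destruct (in_dec site_eq_dec a (s :: rest)) as [A1|A1];
  destruct (in_dec site_eq_dec a rest) as [A2|A2];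
  destruct (in_dec site_eq_dec s (a :: S)) as [A3|A3];
  destruct (in_dec site_eq_dec s S) as [A4|A4];
  cbn [length]; rewrite IHS by auto;
  destruct (in_dec site_eq_dec s S); try contradiction; simpl in *; try lia;
  firstorder (subst; try congruence; try tauto).
Qed.

Lemma cnt_le L S : (cnt L S <= length S)%nat.
Proof. unfold cnt. induction S; simpl; auto. destruct (in_dec _ a L); simpl; lia. Qed.

Lemma zero_update x0 s v rest p : ~ In s rest ->
  zero rest (update x0 s v) p = update (zero (s :: rest) x0) s v p.
Proof.
  intros Hs. unfold zero. rewrite !update_spec.
  destruct (site_eq_dec p s) as [->|Hps].
  - destruct (in_dec site_eq_dec s rest); [contradiction|]. auto.
  - destruct (in_dec site_eq_dec p rest), (in_dec site_eq_dec p (s :: rest)); auto.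
    simpl in *; tauto. simpl in *; destruct i; [congruence|tauto].
Qed.

Lemma TS_exp lam M L S : 0 <= lam -> NoDup L -> NoDup S -> forall x0,
  trunc_sum lam M L (fun x => exp (INR (weight x S))) x0
  <= mm lam ^ cnt L S * exp (INR (weight (zero L x0) S)).
Proof.
  intros Hl HL HS. revert HL. induction L as [|s rest IH]; intros HL x0.
  - assert (Hc: cnt [] S = 0%nat) by (unfold cnt; clear HS; induction S; simpl; auto).
    assert (Hw: weight (zero [] x0) S = weight x0 S) by (apply weight_ext; intros; reflexivity).
    rewrite Hc, Hw; simpl; lra.
  - inversion HL as [|? ? Hs HL']; subst. simpl trunc_sum.
    set (y := zero (s :: rest) x0).
    eapply Rle_trans.
    { apply sum_range_le; intro v. apply Rmult_le_compat_l. apply pmf_nonneg; auto. apply IH; auto. }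
    assert (E: forall v, poisson_pmf lam v * (mm lam ^ cnt rest S * exp (INR (weight (zero rest (update x0 s v)) S)))
      = (mm lam ^ cnt rest S * exp (INR (weight y S))) * (poisson_pmf lam v * exp (INR (if in_dec site_eq_dec s S then v else 0%nat)))).
    { intros v. rewrite (weight_ext _ (update y s v)) by (intros; apply zero_update; auto).
      rewrite weight_update; auto. rewrite plus_INR, exp_plus. ring.
      unfold y, zero. destruct (in_dec site_eq_dec s (s :: rest)); auto. simpl in n; tauto. }
    rewrite (sum_range_ext _ _ _ E), sum_range_scal, cnt_cons by auto.
    assert (0 <= mm lam ^ cnt rest S * exp (INR (weight y S))).
    { apply Rmult_le_pos. apply pow_le. left; apply exp_pos. left; apply exp_pos. }
    destruct (in_dec site_eq_dec s S).
    + eapply Rle_trans. apply Rmult_le_compat_l; auto. apply pmf_sume; auto.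
      simpl. lra.
    + rewrite (sum_range_ext _ _ (poisson_pmf lam)) by (intros; simpl; rewrite exp_0; ring).
      eapply Rle_trans. apply Rmult_le_compat_l; auto. apply pmf_sum1; auto.
      simpl. lra.
Qed.

Definition dirs : list site := [(1,0);(-1,0);(0,1);(0,-1)]%Z.
Definition shift (p d : site) : site := (fst p + fst d, snd p + snd d)%Z.

Fixpoint walks (L : nat) (p : site) : list (list site) :=
  match L with
  | O => [[p]]
  | S L' => flat_map (fun d => map (cons p) (walks L' (shift p d))) dirs
  end.

Fixpoint chain (l : list site) : Prop :=
  match l with
  | a :: ((b :: _) as t) => adjacent a b /\ chain t
  | _ => True
  end.

Lemma walks_length L p : length (walks L p) = (4 ^ L)%nat.
Proof.
  revert p; induction L; intros p; simpl; auto.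
  rewrite !length_app, !length_map, !IHL. simpl. lia.
Qed.

Lemma walks_len L p w : In w (walks L p) -> length w = S L.
Proof.
  revert p w; induction L; intros p w H; cbn [walks] in H.
  - destruct H as [<-|[]]; auto.
  - apply in_flat_map in H as [d [_ H]]. apply in_map_iff in H as [u [<- H]].
    simpl. f_equal. eapply IHL; eauto.
Qed.

Lemma adj_dir p q : adjacent p q -> exists d, In d dirs /\ q = shift p d.
Proof.
  destruct p as [a b], q as [c e]; unfold adjacent, shift, dirs; intros H. simpl in H.
  assert ((c = a + 1 /\ e = b) \/ (c = a - 1 /\ e = b) \/ (c = a /\ e = b + 1) \/ (c = a /\ e = b - 1))%Z as HH by lia.
  destruct HH as [[-> ->]|[[-> ->]|[[-> ->]|[-> ->]]]].
  - exists (1,0)%Z; split; [simpl; auto 6|]. simpl; f_equal; lia.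
  - exists (-1,0)%Z; split; [simpl; auto 6|]. simpl; f_equal; lia.
  - exists (0,1)%Z; split; [simpl; auto 6|]. simpl; f_equal; lia.
  - exists (0,-1)%Z; split; [simpl; auto 6|]. simpl; f_equal; lia.
Qed.

Lemma walks_complete L p w : chain (p :: w) -> length w = L -> In (p :: w) (walks L p).
Proof.
  revert p w; induction L; intros p w Hc Hl.
  - destruct w; simpl in *; try discriminate. auto.
  - destruct w as [|q w]; simpl in Hl; try discriminate.
    destruct Hc as [Ha Hc]. destruct (adj_dir _ _ Ha) as [d [Hd ->]].
    cbn [walks]. apply in_flat_map. exists d; split; auto. apply in_map. apply IHL; auto.
Qed.

Lemma chain_app l1 a l2 : chain (l1 ++ a :: l2) <-> chain (l1 ++ [a]) /\ chain (a :: l2).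
Proof.
  induction l1 as [|b l1 IH]; simpl. tauto.
  destruct l1 as [|c l1]; simpl in *. tauto.
  rewrite IH. tauto.
Qed.

Lemma adj_sym p q : adjacent p q -> adjacent q p.
Proof. unfold adjacent; intros; lia. Qed.

Lemma boundary A S q : In origin S -> reach A q ->
  In q S \/ exists p q', In p S /\ adjacent p q' /\ In q' A /\ ~ In q' S.
Proof.
  intros HO H; induction H as [|p q Hr IH Ha Hq].
  - auto.
  - destruct IH as [Hp|Hb]; auto.
    destruct (in_dec site_eq_dec q S); auto. right. exists p, q; auto.
Qed.

Lemma cover_j A n : animal n A -> forall j, (1 <= j <= n)%nat ->
  exists w' S, chain (origin :: w') /\ length (origin :: w') = (2 * j - 1)%nat /\
    NoDup S /\ length S = j /\ incl S A /\ (forall x, In x (origin :: w') <-> In x S).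
Proof.
  intros [HA [Hlen [HO Hr]]]. induction j as [|j IH]; intros Hj. lia.
  destruct (Nat.eq_dec j 0) as [->|Hj0].
  - exists [], [origin]. simpl. repeat split; auto. constructor; auto. constructor.
    intros x Hx; destruct Hx as [<-|[]]; auto.
  - destruct IH as [w' [S [Hc [Hl [HS [HSl [HSA Heq]]]]]]]. lia.
    assert (Hex: exists a, In a A /\ ~ In a S).
    { apply NNPP; intro Hn. assert (incl A S).
      { intros a Ha. apply NNPP; intro. apply Hn; eauto. }
      pose proof (NoDup_incl_length HA H). lia. }
    destruct Hex as [a [Ha HaS]].
    assert (HOS: In origin S) by (apply Heq; simpl; auto).
    destruct (boundary A S a HOS (Hr a Ha)) as [|[p [q [Hp [Hpq [HqA HqS]]]]]]; [contradiction|].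
    assert (Hpw: In p (origin :: w')) by (apply Heq; auto).
    apply in_split in Hpw as [l1 [l2 Hw]].
    assert (exists w'', origin :: w'' = l1 ++ p :: q :: p :: l2) as [w'' Hw''].
    { destruct l1 as [|b l1]; simpl in *.
      - injection Hw; intros; subst. eauto.
      - injection Hw; intros; subst. eauto. }
    exists w'', (q :: S). rewrite Hw''. split; [|split; [|split; [|split; [|split]]]].
    + rewrite Hw in Hc. apply chain_app in Hc as [Hc1 Hc2]. apply chain_app. split; auto.
      simpl. split; auto. split; auto. apply adj_sym; auto.
    + rewrite Hw in Hl. rewrite length_app in *. simpl in *. lia.
    + constructor; auto.
    + simpl; lia.
    + intros x [<-|Hx]; auto.
    + intros x. rewrite Hw in Heq. specialize (Heq x). rewrite in_app_iff in *. simpl in *.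
      split; intros H.
      * destruct H as [H|[<-|[<-|[<-|H]]]]; try tauto.
      * destruct H as [<-|H]; [tauto|]. apply Heq in H. tauto.
Qed.

Lemma weight_perm x l l' : Permutation l l' -> weight x l = weight x l'.
Proof. induction 1; simpl; lia. Qed.

Lemma max_exists (P : nat -> Prop) B : (exists v, P v) -> (forall v, P v -> (v <= B)%nat) ->
  exists v, P v /\ forall u, P u -> (u <= v)%nat.
Proof.
  revert P; induction B; intros P [v Hv] Hb.
  - exists v; split; auto. intros u Hu. pose proof (Hb u Hu). pose proof (Hb v Hv). lia.
  - destruct (classic (P (S B))) as [H|H].
    + exists (S B); split; auto.
    + apply IHB; eauto. intros u Hu. pose proof (Hb u Hu).
      destruct (Nat.eq_dec u (S B)); [subst; contradiction|lia].
Qed.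

Definition line (n : nat) : list site := map (fun i => (Z.of_nat i, 0%Z)) (seq 0 n).

Lemma line_animal n : (1 <= n)%nat -> animal n (line n).
Proof.
  intros Hn. unfold animal, line.
  assert (HO: In origin (map (fun i => (Z.of_nat i, 0%Z)) (seq 0 n))).
  { apply in_map_iff. exists 0%nat. split; auto. apply in_seq; lia. }
  split; [|split; [|split]].
  - apply NoDup_map_NoDup_ForallPairs. intros a b _ _ H. injection H; lia. apply seq_NoDup.
  - rewrite length_map, length_seq; auto.
  - auto.
  - intros p Hp. apply in_map_iff in Hp as [i [<- Hi]]. apply in_seq in Hi.
    assert (forall j, (j < n)%nat -> reach (map (fun i => (Z.of_nat i, 0%Z)) (seq 0 n)) (Z.of_nat j, 0%Z)).
    { induction j; intros Hj. apply reach_origin; auto.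
      apply reach_step with (Z.of_nat j, 0%Z). apply IHj; lia.
      unfold adjacent; simpl; lia.
      apply in_map_iff. exists (S j); split; auto. apply in_seq; lia. }
    apply H; lia.
Qed.

Definition ws (n : nat) := walks (2 * n - 2) origin.


Lemma animal_walk A n x : (1 <= n)%nat -> animal n A ->
  exists w, In w (ws n) /\ weight x A = weight x (nodup site_eq_dec w).
Proof.
  intros Hn HA. destruct (cover_j A n HA n) as [w' [S [Hc [Hl [HS [HSl [HSA Heq]]]]]]]. lia.
  exists (origin :: w'). split.
  - apply walks_complete; auto. simpl in Hl. lia.
  - apply weight_perm. destruct HA as [HAn [HAl _]].
    assert (incl A S). { apply NoDup_length_incl; auto. lia. }
    apply NoDup_Permutation; auto. apply NoDup_nodup.
    intros y. rewrite nodup_In, Heq. split; auto.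
Qed.

Lemma N_spec n x : (1 <= n)%nat -> is_greedy n x (Defs.N n x).
Proof.
  intros Hn. unfold Defs.N. apply epsilon_spec.
  set (B := fold_right (fun w acc => (weight x (nodup site_eq_dec w) + acc)%nat) 0%nat (ws n)).
  assert (HB: forall w, In w (ws n) -> (weight x (nodup site_eq_dec w) <= B)%nat).
  { unfold B. clear B. induction (ws n); simpl; intros w Hw; [contradiction|].
    destruct Hw as [<-|Hw]; [lia|]. specialize (IHl w Hw); lia. }
  destruct (max_exists (fun v => exists A, animal n A /\ weight x A = v) B) as [v [Hv Hmax]].
  - exists (weight x (line n)), (line n). split; auto. apply line_animal; auto.
  - intros v [A [HA <-]]. destruct (animal_walk A n x Hn HA) as [w [Hw ->]]. auto.
  - exists v. split; auto. intros A HA. apply Hmax. eauto.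
Qed.

Lemma exp_N_bound n x : (1 <= n)%nat ->
  exp (INR (Defs.N n x)) <= sumL (ws n) (fun w => exp (INR (weight x (nodup site_eq_dec w)))).
Proof.
  intros Hn. destruct (N_spec n x Hn) as [[A [HA HW]] _].
  destruct (animal_walk A n x Hn HA) as [w [Hw HW']].
  rewrite <- HW, HW'. apply (sumL_ge (ws n) (fun w => exp (INR (weight x (nodup site_eq_dec w))))); auto.
  intros; left; apply exp_pos.
Qed.

Lemma NoDup_flat_map' {A B} (f : A -> list B) l : NoDup l -> (forall i, NoDup (f i)) ->
  (forall i j y, In y (f i) -> In y (f j) -> i = j) -> NoDup (flat_map f l).
Proof.
  intros Hl Hf Hd. induction l; simpl. constructor.
  inversion Hl; subst. apply NoDup_app; auto.
  intros y Hy Hy'. apply in_flat_map in Hy' as [j [Hj Hy']].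
  rewrite (Hd a j y Hy Hy') in H1. contradiction.
Qed.

Lemma box_NoDup n : NoDup (box n).
Proof.
  unfold box. apply NoDup_flat_map'. apply seq_NoDup.
  - intros i. apply NoDup_map_NoDup_ForallPairs. intros a b _ _ H. injection H; lia. apply seq_NoDup.
  - intros i j y H1 H2. apply in_map_iff in H1 as [a [<- _]]. apply in_map_iff in H2 as [b [H _]].
    injection H; lia.
Qed.

Lemma exp_INR_pow a n : exp (a * INR n) = exp a ^ n.
Proof.
  induction n. simpl. rewrite Rmult_0_r, exp_0; auto.
  rewrite S_INR, Rmult_plus_distr_l, Rmult_1_r, exp_plus, IHn. simpl. ring.
Qed.

Lemma pointwise y a nr k : 0 <= y -> 0 < a -> 0 <= nr ->
  y ^ k <= (2 * a * nr) ^ k + 2 ^ k * INR (fact k) * exp (- (a * nr)) * exp y.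
Proof.
  intros Hy Ha Hn.
  assert (Hf: 0 < INR (fact k)) by apply lt_0_INR, lt_O_fact.
  assert (H0: 0 <= 2 ^ k * INR (fact k) * exp (- (a * nr)) * exp y).
  { repeat apply Rmult_le_pos; try lra; try (left; apply exp_pos). apply pow_le; lra. }
  destruct (Rle_dec y (2 * a * nr)).
  - assert (y ^ k <= (2 * a * nr) ^ k) by (apply pow_incr; lra). lra.
  - assert (0 <= (2 * a * nr) ^ k) by (apply pow_le; nra).
    assert (E1: exp (- (a * nr)) * exp y = exp (y - a * nr)) by (rewrite <- exp_plus; f_equal; ring).
    assert (E2: exp (y / 2) <= exp (y - a * nr)).
    { destruct (Req_dec (y/2) (y - a*nr)) as [->|]; [lra|]. left; apply exp_increasing. nra. }
    pose proof (exp_term (y/2) k ltac:(lra)) as Ht.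
    assert (E3: y ^ k = 2 ^ k * INR (fact k) * ((y / 2) ^ k / INR (fact k))).
    { replace y with (2 * (y / 2)) at 1 by field. rewrite Rpow_mult_distr. field. lra. }
    replace (2 ^ k * INR (fact k) * exp (- (a * nr)) * exp y) with (2 ^ k * INR (fact k) * exp (y - a * nr)) by (rewrite <- E1; ring).
    assert (y ^ k <= 2 ^ k * INR (fact k) * exp (y - a * nr)).
    { rewrite E3. apply Rmult_le_compat_l. apply Rmult_le_pos; [apply pow_le|]; lra. lra. }
    lra.
Qed.

Lemma exp1_gt2 : 2 < exp 1.
Proof. pose proof (exp_ineq1 1 ltac:(lra)). lra. Qed.

Lemma exp4_ge16 : 16 <= exp 4.
Proof.
  replace 4 with (1 * INR 4) by (simpl; ring). rewrite exp_INR_pow.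
  replace 16 with (2 ^ 4) by ring. apply pow_incr. pose proof exp1_gt2; lra.
Qed.

Lemma mm_ge1 lam : 0 <= lam -> 1 <= mm lam.
Proof.
  intros H. unfold mm. pose proof exp1_gt2. rewrite <- exp_0 at 1.
  destruct H as [H|<-]; [|rewrite Rmult_0_l; lra].
  left; apply exp_increasing. apply Rmult_lt_0_compat; lra.
Qed.

Lemma count_bound lam (n' : nat) : 0 <= lam ->
  4 ^ (2 * n') * mm lam ^ S (2 * n') <= exp ((4 + 2 * (lam * (exp 1 - 1))) * INR (S n')).
Proof.
  intros Hl. rewrite exp_INR_pow, exp_plus.
  replace (exp (2 * (lam * (exp 1 - 1)))) with (mm lam ^ 2)
    by (unfold mm; simpl; rewrite Rmult_1_r, <- exp_plus; f_equal; ring).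
  pose proof (mm_ge1 lam Hl) as Hm. pose proof exp4_ge16.
  rewrite Rpow_mult_distr, pow_mult.
  replace (4 ^ 2) with 16 by ring.
  apply Rmult_le_compat.
  - apply pow_le; lra.
  - apply pow_le; lra.
  - apply Rle_trans with (16 ^ S n'). simpl. pose proof (pow_le 16 n' ltac:(lra)). lra.
    apply pow_incr; lra.
  - rewrite <- pow_mult. apply Rle_pow; lia || lra.
Qed.

Theorem corollary3p2 (lam : R) (hlam : 0 < lam) (k : nat) :
  exists C : R, forall n : nat, (1 <= n)%nat ->
    forall M : nat, trunc_moment lam n k M <= C * INR n ^ k.
Proof.
  set (a := 4 + 2 * (lam * (exp 1 - 1))).
  assert (Ha: 0 < a). { unfold a. pose proof exp1_gt2. nra. }
  set (K := 2 ^ k * INR (fact k)).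
  assert (HK: 0 <= K). { unfold K. apply Rmult_le_pos. apply pow_le; lra. apply pos_INR. }
  exists ((2 * a) ^ k + K). intros n Hn M. unfold trunc_moment.
  set (nr := INR n).
  assert (Hnr: 1 <= nr) by (unfold nr; apply (le_INR 1); auto).
  set (G := fun x => sumL (ws n) (fun w => exp (INR (weight x (nodup site_eq_dec w))))).
  eapply Rle_trans.
  { apply (TS_mono lam M (box n) _ (fun x => (2 * a * nr) ^ k * 1 + (K * exp (- (a * nr))) * G x)).
    lra. intros x.
    pose proof (pointwise (INR (Defs.N n x)) a nr k (pos_INR _) Ha ltac:(lra)) as P.
    pose proof (exp_N_bound n x Hn) as Q. fold K in P.
    assert (0 <= K * exp (- (a * nr))) by (apply Rmult_le_pos; auto; left; apply exp_pos).
    assert (K * exp (- (a * nr)) * exp (INR (Defs.N n x)) <= K * exp (- (a * nr)) * G x)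
      by (apply Rmult_le_compat_l; auto).
    lra. }
  rewrite TS_plus, TS_scal, TS_scal.
  assert (T1: trunc_sum lam M (box n) (fun _ => 1) (fun _ => 0%nat) <= 1).
  { rewrite (TS_ext lam M (box n) _ (fun x => exp (INR (weight x [])))) by (intros; simpl; rewrite exp_0; auto).
    eapply Rle_trans. apply TS_exp; [lra|apply box_NoDup|constructor].
    simpl. rewrite exp_0. right; ring. }
  assert (T2: trunc_sum lam M (box n) G (fun _ => 0%nat) <= INR (4 ^ (2 * n - 2)) * mm lam ^ (S (2 * n - 2))).
  { unfold G. rewrite (TS_sumL lam M (ws n) (fun w x => exp (INR (weight x (nodup site_eq_dec w))))).
    unfold ws. rewrite <- (walks_length (2 * n - 2) origin). apply sumL_le.
    intros w Hw. eapply Rle_trans. apply TS_exp; [lra|apply box_NoDup|apply NoDup_nodup].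
    rewrite (weight_ext _ (fun _ => 0%nat)) by (intros; unfold zero; destruct in_dec; auto).
    rewrite weight_zero. simpl INR. rewrite exp_0, Rmult_1_r.
    apply Rle_pow. apply mm_ge1; lra.
    rewrite <- (walks_len _ _ _ Hw). eapply Nat.le_trans. apply cnt_le.
    apply NoDup_incl_length. apply NoDup_nodup. intros y Hy; apply nodup_In in Hy; auto. }
  assert (T3: exp (- (a * nr)) * (INR (4 ^ (2 * n - 2)) * mm lam ^ (S (2 * n - 2))) <= 1).
  { destruct n as [|n']; [lia|]. replace (2 * S n' - 2)%nat with (2 * n')%nat by lia.
    rewrite pow_INR. pose proof (count_bound lam n' ltac:(lra)) as CB. fold a in CB.
    unfold nr. rewrite exp_Ropp.
    apply Rmult_le_reg_l with (exp (a * INR (S n'))). apply exp_pos.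
    rewrite <- Rmult_assoc, Rinv_r, Rmult_1_l, Rmult_1_r. replace (INR 4) with 4 by (simpl; ring). exact CB.
    apply Rgt_not_eq, exp_pos. }
  assert (Hnk: 1 <= nr ^ k) by (apply pow_R1_Rle; lra).
  assert (Hp: 0 <= (2 * a * nr) ^ k) by (apply pow_le; nra).
  assert (E: (2 * a * nr) ^ k = (2 * a) ^ k * nr ^ k) by (apply Rpow_mult_distr).
  assert (HE: 0 <= exp (- (a * nr))) by (left; apply exp_pos).
  assert (K * exp (- (a * nr)) * trunc_sum lam M (box n) G (fun _ => 0%nat) <= K).
  { rewrite Rmult_assoc. rewrite <- (Rmult_1_r K) at 2. apply Rmult_le_compat_l; auto.
    eapply Rle_trans; [|apply T3]. apply Rmult_le_compat_l; auto. }
  assert ((2 * a * nr) ^ k * trunc_sum lam M (box n) (fun _ => 1) (fun _ => 0%nat) <= (2 * a * nr) ^ k).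
  { rewrite <- (Rmult_1_r ((2 * a * nr) ^ k)) at 2. apply Rmult_le_compat_l; auto. }
  assert (K <= K * nr ^ k) by (rewrite <- (Rmult_1_r K) at 1; apply Rmult_le_compat_l; auto).
  rewrite E in *. lra.
Qed.
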